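(* Let $G$ be a connected graph and $(u,v)\in V_p$. Then $r_w(u,v)=0$ for all $w\in V(G)\setminus\{u,v\}$ if and only if $V_i(u)\setminus\{v\}=V_i(v)\setminus\{u\}$ for every $1\le i\le\mathrm{diam}(G)$, where $V_i(x)=\{y\in V(G)\setminus\{x\}: d(x,y)=i\}$.
   Context: Graphs are finite, simple and connected; $d(u,v)$ denotes the shortest-path distance. $V_p$ denotes the set of all unordered pairs $(u,v)$ of distinct vertices. A vertex $x$ resolves the pair $(u,v)$ if $d(x,u)\neq d(x,v)$. For $(u,v)\in V_p$, $R(u,v)$ is the set of all vertices resolving $(u,v)$. The resolving share of a vertex $w$ for $(u,v)$ is $r_w(u,v)=\frac{1}{|R(u,v)|}$ if $w$ resolves $u$ and $v$, and $r_w(u,v)=0$ otherwise. (In the paper the condition $V_i(u)\setminus\{v\}=V_i(v)\setminus\{u\}$ for all $i$ is written $\Pi_u-\{v\}=\Pi_v-\{u\}$, where $\Pi_x=\{V_i(x):1\le i\le \mathrm{diam}(G)\}$ is the distance partition with respect to $x$.) *)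

(* Defs.v *)
From mathcomp Require Import all_boot all_order all_algebra rat.
Set Implicit Arguments. Unset Strict Implicit. Unset Printing Implicit Defensive.
Import Order.TTheory GRing.Theory Num.Theory.

Section Graph.
Variables (T : finType) (e : rel T).

Definition simple_graph := symmetric e /\ irreflexive e.
Definition connected_graph := forall x y : T, connect e x y.

Definition walk_of_len (x y : T) (n : nat) : bool :=
  [exists p : n.-tuple T, path e x p && (last x p == y)].

(* shortest-path distance: least n with a walk of length n from x to y
   (a shortest walk is a path, so n < #|T| for connected graphs) *)
Definition dist (x y : T) : nat :=
  nth #|T| (iota 0 #|T|) (find (walk_of_len x y) (iota 0 #|T|)).

Definition diam : nat := \max_(x : T) \max_(y : T) dist x y.

Definition Vlayer (i : nat) (x : T) : {set T} := [set y | (y != x) && (dist x y == i)].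

Definition resolves (w u v : T) : bool := dist w u != dist w v.

Definition resolving_set (u v : T) : {set T} := [set x | resolves x u v].

Definition rshare (w u v : T) : rat :=
  if resolves w u v then ((#|resolving_set u v|%:R)^-1)%R else 0%R.
End Graph.

(* Main.v *)
Require Import Defs.
From mathcomp Require Import all_boot all_order all_algebra.
Local Open Scope ring_scope.
Import GRing.Theory Num.Theory.

Lemma walk_sym (T : finType) (e : rel T) x y n :
  symmetric e -> walk_of_len e x y n -> walk_of_len e y x n.
Proof.
move=> se /existsP [p /andP [hp /eqP hl]]; apply/existsP.
have sz : size (rev (belast x p)) == n by rewrite size_rev size_belast size_tuple.
exists (Tuple sz) => /=; apply/andP; split.
  rewrite -hl rev_path; move: hp; rewrite (@eq_path _ e [rel a b | e b a]) // => a b; rewrite /= se.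
rewrite -hl; case: (tval p) => [|a q] /=; first by [].
by rewrite rev_cons last_rcons.
Qed.

Lemma dist_sym (T : finType) (e : rel T) x y :
  symmetric e -> dist e x y = dist e y x.
Proof.
move=> se; rewrite /dist (@eq_find _ (walk_of_len e x y) (walk_of_len e y x)) //.
by move=> n; apply/idP/idP; apply: walk_sym.
Qed.

Lemma dist_gt0 (T : finType) (e : rel T) x y : x != y -> (0 < dist e x y)%N.
Proof.
move=> nxy; rewrite /dist.
have hT : (0 < #|T|)%N by apply/card_gt0P; exists x.
case hf: (find (walk_of_len e x y) (iota 0 #|T|)) => [|k].
  have hhas : has (walk_of_len e x y) (iota 0 #|T|) by rewrite has_find hf size_iota.
  have := nth_find 0 hhas; rewrite hf.
  have -> : nth 0%N (iota 0 #|T|) 0 = 0%N by case: #|T| hT.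
  case/existsP => p /andP [_ /eqP hl].
  by move: hl; rewrite (size0nil (size_tuple p)) /= => hxy; rewrite hxy eqxx in nxy.
case: (ltnP k.+1 (size (iota 0 #|T|))) => h.
  by rewrite nth_iota // -(size_iota 0 #|T|).
by rewrite nth_default.
Qed.

Lemma dist_le_diam (T : finType) (e : rel T) x y : (dist e x y <= diam e)%N.
Proof.
rewrite /diam; have h1 := @leq_bigmax T (fun y => dist e x y) y.
have h2 := @leq_bigmax T (fun x => (\max_(y : T) dist e x y)%N) x.
exact: leq_trans h1 h2.
Qed.

Theorem lemma2p4 (T : finType) (e : rel T) (u v : T) :
  simple_graph e -> connected_graph e -> u != v ->
  (forall w : T, w != u -> w != v -> rshare e w u v = 0) <->
  (forall i : nat, (1 <= i <= diam e)%N ->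
     Vlayer e i u :\ v = Vlayer e i v :\ u).
Proof.
move=> [se _] _ nuv.
have key : forall w, w != u -> w != v -> rshare e w u v = 0 <-> dist e w u = dist e w v.
  move=> w _ _; rewrite /rshare /resolves.
  case: eqP => [->|h]; first by split.
  split => // /eqP; rewrite invr_eq0 pnatr_eq0.
  move=> /eqP /card0_eq /(_ w); rewrite !inE /resolves => /negP hn; exfalso; apply: hn; by move/eqP.
split.
  move=> H i _; apply/setP => y; rewrite !inE.
  case: (eqVneq y v) => [->|yv]; first by rewrite /= andbF.
Show.
  case: (eqVneq y u) => [->|yu] //=.
  by rewrite (@dist_sym _ e u y se) (@dist_sym _ e v y se) ((key y yu yv).1 (H y yu yv)).
move=> H w wu wv; apply/(key w wu wv).
have := H (dist e u w); rewrite dist_gt0 1?eq_sym // dist_le_diam => /(_ isT) /setP /(_ w).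
rewrite !inE wu wv eqxx /= => /esym /eqP.
by rewrite (@dist_sym _ e w u se) (@dist_sym _ e w v se) => ->.
Qed.
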